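(* Consider a finite MDP $(\mathcal{S},\mathcal{A},P,r)$ with $r:\mathcal{S}\times\mathcal{A}\to[0,1]$ and discount factor $\gamma\in[0,1)$. Let $U,U'\in\mathbb{R}^{\mathcal{S}}$ satisfy $U\ge U'\ge V^*$ and, for all $s\in\mathcal{S}$ and $a\in\mathcal{A}$, $U(s)\ge r(s,a)+\gamma P_{s,a}U$ and $U'(s)\ge r(s,a)+\gamma P_{s,a}U'$. Let $\theta=\|U-V^*\|_\infty$. Then for every stationary policy $\pi$ and every $\tilde s\in\mathcal{S}$, \[ \sum_{s,a}\tilde d_\gamma^{\pi}(s,a\mid\tilde s)\,\mathbb{V}(P_{s,a},U-U')\ \le\ 4\theta^2+2\theta\big(V^*(\tilde s)-V^{\pi}(\tilde s)\big). \]
   Context: $P_{s,a}\in\Delta^{\mathcal{S}}$ is the transition distribution from $(s,a)$ and $P_{s,a}V=\sum_{s'}P(s'|s,a)V(s')$. For $p\in\Delta^{\mathcal{S}}$ and $x\in\mathbb{R}^{\mathcal{S}}$, $\mathbb{V}(p,x)=\sum_{s}p(s)x(s)^2-(\sum_s p(s)x(s))^2$. $V^*$ is the optimal $\gamma$-discounted value function, $V^{\pi}(\tilde s)=\mathbb{E}_\pi[\sum_{t\ge1}\gamma^{t-1}r(s_t,a_t)\mid s_1=\tilde s]$, and $\tilde d_\gamma^{\pi}(s,a\mid\tilde s)=\mathbb{E}_\pi\big[\sum_{t=1}^\infty\gamma^{t-1}\mathbb{I}[(s_t,a_t)=(s,a)]\mid s_1=\tilde s\big]$ with $a_t\sim\pi(\cdot|s_t)$,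 $s_{t+1}\sim P_{s_t,a_t}$. *)

(* Defs.v *)
From HB Require Import structures.
From mathcomp Require Import all_boot all_order all_algebra.
From mathcomp Require Import all_classical all_reals all_analysis.
Set Implicit Arguments. Unset Strict Implicit. Unset Printing Implicit Defensive.
Import Order.TTheory GRing.Theory Num.Theory.
Local Open Scope classical_set_scope.
Local Open Scope ring_scope.

Section MDP.
Variables (R : realType) (S A : finType).

(* P s a s' = P(s' | s, a) *)
Definition is_transition (P : S -> A -> S -> R) : Prop :=
  forall s a, (forall s', 0 <= P s a s') /\ \sum_(s' : S) P s a s' = 1.

(* a stationary (possibly randomized) policy: pi s a = pi(a | s) *)
Definition is_policy (pi : S -> A -> R) : Prop :=
  forall s, (forall a, 0 <= pi s a) /\ \sum_(a : A) pi s a = 1.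

Definition PV (P : S -> A -> S -> R) (s : S) (a : A) (V : S -> R) : R :=
  \sum_(s' : S) P s a s' * V s'.

Definition mdp_variance (p : S -> R) (x : S -> R) : R :=
  \sum_(s : S) p s * x s ^+ 2 - (\sum_(s : S) p s * x s) ^+ 2.

(* state distribution at step t+1 (t = 0 is s_1 = s0) under pi *)
Fixpoint state_dist (P : S -> A -> S -> R) (pi : S -> A -> R) (s0 : S)
  (t : nat) : S -> R :=
  match t with
  | 0 => fun s => if s == s0 then 1 else 0
  | t'.+1 => fun s' => \sum_(s : S) \sum_(a : A)
       state_dist P pi s0 t' s * pi s a * P s a s'
  end.

(* d~_gamma^pi(s, a | s0) = sum_{t>=1} gamma^{t-1} Pr[(s_t,a_t) = (s,a)] *)
Definition occupancy (P : S -> A -> S -> R) (pi : S -> A -> R) (gamma : R)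
  (s0 : S) (s : S) (a : A) : R :=
  limn (fun n => \sum_(0 <= t < n) gamma ^+ t * (state_dist P pi s0 t s * pi s a)).

(* V^pi(s0) = E_pi[ sum_{t>=1} gamma^{t-1} r(s_t,a_t) | s_1 = s0 ] *)
Definition Vpi (P : S -> A -> S -> R) (r : S -> A -> R) (gamma : R)
  (pi : S -> A -> R) (s0 : S) : R :=
  limn (fun n => \sum_(0 <= t < n) gamma ^+ t *
     (\sum_(s : S) \sum_(a : A) state_dist P pi s0 t s * pi s a * r s a)).

Definition Vstar (P : S -> A -> S -> R) (r : S -> A -> R) (gamma : R)
  (s0 : S) : R :=
  sup [set x | exists pi, is_policy pi /\ x = Vpi P r gamma pi s0].

Definition supnorm (V : S -> R) : R := \big[Num.max/0]_(s : S) `|V s|.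

End MDP.

(* Main.v *)
Require Import Defs.
From HB Require Import structures.
From mathcomp Require Import all_boot all_order all_algebra.
From mathcomp Require Import all_classical all_reals all_analysis.
From mathcomp Require Import lra.
Import Order.TTheory GRing.Theory Num.Theory.
Local Open Scope ring_scope.

Set Implicit Arguments. Unset Strict Implicit.

Section H.
Variables (R : realType) (S A : finType) (P : S -> A -> S -> R) (pi : S -> A -> R) (s0 : S).
Hypothesis HP : is_transition P.
Hypothesis Hpi : is_policy pi.
Local Notation mu := (state_dist P pi s0).

Lemma mu_ge0 t s : 0 <= mu t s.
Proof.
elim: t s => [|t IH] s /=; first by case: ifP.
apply: sumr_ge0 => x _; apply: sumr_ge0 => a _.
apply: mulr_ge0; [apply: mulr_ge0 => //; exact: (Hpi x).1|exact: (HP x a).1].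
Qed.

Lemma M_E t (g : S -> R) : \sum_s mu t s * g s = \sum_s \sum_a mu t s * pi s a * g s.
Proof.
apply: eq_bigr => s _.
by rewrite -mulr_suml -mulr_sumr (Hpi s).2 mulr1.
Qed.

Lemma M_succ t (g : S -> R) : \sum_s mu t.+1 s * g s = \sum_s \sum_a mu t s * pi s a * PV P s a g.
Proof.
rewrite /=.
under eq_bigr do rewrite mulr_suml.
rewrite exchange_big /=; apply: eq_bigr => s _.
under eq_bigr do rewrite mulr_suml.
rewrite exchange_big /=; apply: eq_bigr => a _.
rewrite /PV mulr_sumr; apply: eq_bigr => s' _; by rewrite mulrA.
Qed.

Lemma mu_sum t : \sum_s mu t s = 1.
Proof.
elim: t => [|t IH].
  rewrite (bigD1 s0) //= eqxx big1 ?addr0 // => s /negbTE -> //.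
have := M_succ t (fun _ => 1).
under eq_bigr do rewrite mulr1.
move=> ->.
rewrite -[RHS]IH; apply: eq_bigr => s _.
have h a : PV P s a (fun=> 1) = 1.
  rewrite /PV -[RHS](HP s a).2; apply: eq_bigr => s' _; exact: mulr1.
under eq_bigr do rewrite h mulr1.
by rewrite -mulr_sumr (Hpi s).2 mulr1.
Qed.


Definition E t (f : S -> A -> R) := \sum_s \sum_a mu t s * pi s a * f s a.

Lemma E_le t f g : (forall s a, f s a <= g s a) -> E t f <= E t g.
Proof.
move=> h; apply: ler_sum => s _; apply: ler_sum => a _.
apply: ler_wpM2l => //; apply: mulr_ge0; [exact: mu_ge0|exact: (Hpi s).1].
Qed.

Lemma E_D t f g : E t (fun s a => f s a + g s a) = E t f + E t g.
Proof.
rewrite /E -big_split; apply: eq_bigr => s _; rewrite -big_split.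
by apply: eq_bigr => a _; rewrite mulrDr.
Qed.

Lemma E_Z t c f : E t (fun s a => c * f s a) = c * E t f.
Proof.
rewrite /E mulr_sumr; apply: eq_bigr => s _; rewrite mulr_sumr.
by apply: eq_bigr => a _; rewrite mulrCA.
Qed.

Lemma E_N t f : E t (fun s a => - f s a) = - E t f.
Proof.
rewrite -mulN1r -E_Z; apply: eq_bigr => s _; apply: eq_bigr => a _.
by rewrite mulN1r.
Qed.

Lemma E_ext t f g : (forall s a, f s a = g s a) -> E t f = E t g.
Proof. by move=> h; apply: eq_bigr => s _; apply: eq_bigr => a _; rewrite h. Qed.

Lemma M0 (g : S -> R) : \sum_s mu 0 s * g s = g s0.
Proof.
rewrite (bigD1 s0) //= eqxx mul1r big1 ?addr0 // => s /negbTE h.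
by rewrite h mul0r.
Qed.

Lemma M_le t (g : S -> R) c : (forall s, g s <= c) -> \sum_s mu t s * g s <= c.
Proof.
move=> h; rewrite -[leRHS]mul1r -(mu_sum t) mulr_suml.
by apply: ler_sum => s _; apply: ler_wpM2l => //; exact: mu_ge0.
Qed.

Lemma M_ge t (g : S -> R) c : (forall s, c <= g s) -> c <= \sum_s mu t s * g s.
Proof.
move=> h; rewrite -[leLHS]mul1r -(mu_sum t) mulr_suml.
by apply: ler_sum => s _; apply: ler_wpM2l => //; exact: mu_ge0.
Qed.

End H.

Lemma supnorm_ge0 (R : realType) (S : finType) (f : S -> R) : 0 <= supnorm f.
Proof. by rewrite /supnorm; elim/big_ind: _ => // x y hx hy; rewrite le_max hx. Qed.

Lemma supnorm_le (R : realType) (S : finType) (f : S -> R) s : `|f s| <= supnorm f.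
Proof. by rewrite /supnorm (bigD1 s) //= le_max lexx. Qed.

Lemma PV_bnd (R : realType) (S A : finType) (P : S -> A -> S -> R) (HP : is_transition P)
  s a (g : S -> R) c d : (forall s', c <= g s' <= d) -> c <= PV P s a g <= d.
Proof.
move=> h; apply/andP; split.
- rewrite -[leLHS]mul1r -(HP s a).2 mulr_suml /PV; apply: ler_sum => s' _.
  by apply: ler_wpM2l; [exact: (HP s a).1| case/andP: (h s')].
- rewrite -[leRHS]mul1r -(HP s a).2 mulr_suml /PV; apply: ler_sum => s' _.
  by apply: ler_wpM2l; [exact: (HP s a).1| case/andP: (h s')].
Qed.

Lemma PVB (R : realType) (S A : finType) (P : S -> A -> S -> R) s a (f g : S -> R) :
  PV P s a (fun s' => f s' - g s') = PV P s a f - PV P s a g.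
Proof. by rewrite /PV -sumrB; apply: eq_bigr => s' _; rewrite mulrBr. Qed.

Unset Implicit Arguments.

Section Main.
Variables (R : realType) (S A : finType) (P : S -> A -> S -> R) (pi : S -> A -> R) (s0 : S)
  (r : S -> A -> R) (gamma : R) (U U' Vs : S -> R).
Hypothesis HP : is_transition P.
Hypothesis Hpi : is_policy pi.
Hypothesis Hgamma : 0 <= gamma < 1.
Hypothesis HUU' : forall s, U' s <= U s.
Hypothesis HU'V : forall s, Vs s <= U' s.
Hypothesis HUb : forall s a, r s a + gamma * PV P s a U <= U s.
Hypothesis HU'b : forall s a, r s a + gamma * PV P s a U' <= U' s.
Local Notation mu := (state_dist P pi s0).
Local Notation theta := (supnorm (fun s => U s - Vs s)).
Local Notation D := (fun s => U s - U' s).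

Lemma D_bnd s : 0 <= D s <= theta.
Proof.
rewrite /= subr_ge0 HUU' /=.
have := le_trans (ler_norm _) (supnorm_le (fun s => U s - Vs s) s) => /=.
by have := HU'V s; lra.
Qed.

Lemma pointwise s a : mdp_variance (P s a) D <=
  PV P s a (fun s' => D s' ^+ 2) - D s ^+ 2 + 2 * theta * (U s - r s a - gamma * PV P s a U).
Proof.
have -> : mdp_variance (P s a) D = PV P s a (fun s' => D s' ^+ 2) - (PV P s a D) ^+ 2 by [].
have hy := PV_bnd HP s a D_bnd.
have hB : PV P s a D = PV P s a U - PV P s a U' by rewrite PVB.
have hx := D_bnd s.
have hg := HUb s a. have hg' := HU'b s a.
set y := PV P s a D in hy hB *.
set x := D s in hx *.
set pu := PV P s a U in hB hg *.
set pu' := PV P s a U' in hB hg' *.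
have h1 : 0 <= (1 - gamma) * y.
  by apply: mulr_ge0; [move: Hgamma => /andP[_ ?]; lra | case/andP: hy].
have hh : 0 <= U s - r s a - gamma * pu - (x - y).
  rewrite /x hB; rewrite hB in h1; lra.
set g := U s - r s a - gamma * pu in hh *.
have hg0 : 0 <= g by rewrite /g; lra.
case/andP: hx => hx0 hx1; case/andP: hy => hy0 hy1.
nra.
Qed.


Local Notation M t g := (\sum_s mu t s * g s).
Local Notation Var := (fun s a => mdp_variance (P s a) D).

Lemma step t : E P pi s0 t Var <=
  M t.+1 (fun s => D s ^+ 2) - M t (fun s => D s ^+ 2)
  + 2 * theta * (M t U - E P pi s0 t r - gamma * M t.+1 U).
Proof.
apply: le_trans (E_le s0 HP Hpi t pointwise) _.
rewrite E_D E_D E_N E_Z E_D E_N E_Z.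
rewrite !E_D !E_N.
rewrite !M_succ !(M_E P s0 Hpi) /E; lra.
Qed.


Lemma sum_recr (F : nat -> R) n : \sum_(0 <= t < n.+1) F t = \sum_(0 <= t < n) F t + F n.
Proof. exact: big_nat_recr. Qed.

Lemma claim n : \sum_(0 <= t < n) gamma ^+ t * E P pi s0 t Var <=
  (1 - gamma ^+ n) * theta ^+ 2 + gamma ^+ n * M n (fun s => D s ^+ 2)
  + 2 * theta * (U s0 - gamma ^+ n * M n U - \sum_(0 <= t < n) gamma ^+ t * E P pi s0 t r).
Proof.
elim: n => [|n IH].
  rewrite !big_geq // expr0 !M0 /=. 
  have := sqr_ge0 (U s0 - U' s0); lra.
rewrite !sum_recr.
have hst := step n.
have hg : 0 <= gamma ^+ n by apply: exprn_ge0; case/andP: Hgamma.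
have hA : M n.+1 (fun s => D s ^+ 2) <= theta ^+ 2.
  apply: (@M_le _ _ _ P pi s0 HP Hpi) => s; have /andP[h0 h1] := D_bnd s.
  move: h0 h1 => /= h0 h1. nra.
have hprod : 0 <= gamma ^+ n * (1 - gamma) * (theta ^+ 2 - M n.+1 (fun s => D s ^+ 2)).
  apply: mulr_ge0; last by lra.
  by apply: mulr_ge0 => //; case/andP: Hgamma => _ ?; lra.
have hgst := ler_wpM2l hg hst.
rewrite exprS.
set g := gamma ^+ n in hg hgst hprod IH *.
set An := M n (fun s => D s ^+ 2) in IH hgst *.
set An1 := M n.+1 (fun s => D s ^+ 2) in hA hgst hprod *.
set Bn := M n U in IH hgst *.
set Bn1 := M n.+1 U in hgst *.
set Er := E P pi s0 n r in hgst *.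
set EV := E P pi s0 n Var in hgst *.
nra.
Qed.


Lemma abs_le_sum (f : S -> R) s : `|f s| <= \sum_s' `|f s'|.
Proof. by rewrite (bigD1 s) //= lerDl sumr_ge0. Qed.

Lemma bound n : \sum_(0 <= t < n) gamma ^+ t * E P pi s0 t Var <=
  theta ^+ 2 + 2 * theta * (U s0 + gamma ^+ n * \sum_s `|U s| - \sum_(0 <= t < n) gamma ^+ t * E P pi s0 t r).
Proof.
apply: le_trans (claim n) _.
have hg : 0 <= gamma ^+ n by apply: exprn_ge0; case/andP: Hgamma.
have hg1 : gamma ^+ n <= 1 by apply: exprn_ile1; case/andP: Hgamma => // _ /ltW.
have hA : M n (fun s => D s ^+ 2) <= theta ^+ 2.
  apply: (@M_le _ _ _ P pi s0 HP Hpi) => s; have /andP[h0 h1] := D_bnd s.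
  move: h0 h1 => /= h0 h1; nra.
have hB : - \sum_s `|U s| <= M n U.
  apply: (@M_ge _ _ _ P pi s0 HP Hpi) => s.
  have := abs_le_sum U s; have := ler_norm (- U s); rewrite normrN; lra.
have ht := supnorm_ge0 (fun s => U s - Vs s).
set K := \sum_s `|U s| in hB *.
set An := M n (fun s => D s ^+ 2) in hA *.
set Bn := M n U in hB *.
set g := gamma ^+ n in hg hg1 *.
have p1 : 0 <= g * (theta ^+ 2 - An) by apply: mulr_ge0 => //; lra.
have p2 : 0 <= theta * (g * (Bn + K)) by apply: mulr_ge0 => //; apply: mulr_ge0 => //; lra.
lra.
Qed.

Lemma swap n (f : S -> A -> R) :
  \sum_s \sum_a (\sum_(0 <= t < n) gamma ^+ t * (mu t s * pi s a)) * f s a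
  = \sum_(0 <= t < n) gamma ^+ t * E P pi s0 t f.
Proof.
rewrite /E.
under [RHS]eq_bigr do rewrite mulr_sumr.
rewrite [RHS]exchange_big /=; apply: eq_bigr => s _.
under [RHS]eq_bigr do rewrite mulr_sumr.
rewrite [RHS]exchange_big /=; apply: eq_bigr => a _.
rewrite mulr_suml; apply: eq_bigr => t _; by rewrite !mulrA.
Qed.

End Main.

Set Implicit Arguments.

Lemma geom_sum (R : realType) (g : R) n :
  (1 - g) * \sum_(0 <= t < n) g ^+ t = 1 - g ^+ n.
Proof.
elim: n => [|n IH]; first by rewrite big_geq // expr0 mulr0 subrr.
rewrite big_nat_recr //= mulrDr IH exprS; lra.
Qed.

Lemma cvg_psum (R : realType) (g : R) (u : nat -> R) c :
  0 <= g < 1 -> (forall t, 0 <= u t <= c * g ^+ t) ->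
  cvgn (fun n => \sum_(0 <= t < n) u t).
Proof.
move=> /andP[g0 g1] hu.
apply: nondecreasing_is_cvgn.
  by apply: nondecreasing_series => n _ _; case/andP: (hu n).
have c0 : 0 <= c by have := hu 0%N; rewrite expr0 mulr1 => /andP[h1 h2]; exact: le_trans h1 h2.
exists (c / (1 - g)) => _ [n _ <-].
rewrite ler_pdivlMr ?subr_gt0 //.
have h1 : \sum_(0 <= t < n) u t <= c * \sum_(0 <= t < n) g ^+ t.
  by rewrite mulr_sumr; apply: ler_sum => t _; case/andP: (hu t).
have h2 := geom_sum g n.
have h3 : 0 <= g ^+ n by apply: exprn_ge0.
have h4 : 0 <= 1 - g by lra.
set s := \sum_(0 <= t < n) u t in h1 *.
set G := \sum_(0 <= t < n) g ^+ t in h1 h2 *.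
nra.
Qed.

Unset Implicit Arguments.
Local Open Scope classical_set_scope.
Local Open Scope ring_scope.

Theorem mainTheorem6 (R : realType) (S A : finType)
  (P : S -> A -> S -> R) (r : S -> A -> R) (gamma : R)
  (HP : is_transition P)
  (Hr : forall s a, 0 <= r s a <= 1)
  (Hgamma : 0 <= gamma < 1)
  (U U' : S -> R)
  (HUU' : forall s, U' s <= U s)
  (HU'V : forall s, Vstar P r gamma s <= U' s)
  (HUb : forall s a, r s a + gamma * PV P s a U <= U s)
  (HU'b : forall s a, r s a + gamma * PV P s a U' <= U' s)
  (pi : S -> A -> R) (Hpi : is_policy pi) (s0 : S) :
  let theta := supnorm (fun s => U s - Vstar P r gamma s) in
  \sum_(s : S) \sum_(a : A)
     occupancy P pi gamma s0 s a * mdp_variance (P s a) (fun s' => U s' - U' s')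
  <= 4 * theta ^+ 2
     + 2 * theta * (Vstar P r gamma s0 - Vpi P r gamma pi s0).
Proof.
cbv zeta; set theta := supnorm _.
set Vs := Vstar P r gamma.
have mu_le1 t s : state_dist P pi s0 t s <= 1.
  rewrite -(mu_sum s0 HP Hpi t) (bigD1 s) //= lerDl sumr_ge0 // => x _.
  exact: mu_ge0.
have pi_le1 s a : pi s a <= 1.
  rewrite -(Hpi s).2 (bigD1 a) //= lerDl sumr_ge0 // => x _.
  exact: (Hpi s).1.
have cvocc s a : cvgn (fun n => \sum_(0 <= t < n) gamma ^+ t * (state_dist P pi s0 t s * pi s a)).
  apply: (@cvg_psum _ gamma _ 1) => // t.
  have h1 := mu_ge0 s0 HP Hpi t s. have h2 := (Hpi s).1 a.
  have h3 := mu_le1 t s. have h4 := pi_le1 s a.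
  have hg : 0 <= gamma ^+ t by apply: exprn_ge0; case/andP: Hgamma.
  rewrite mul1r; apply/andP; split; first by apply: mulr_ge0 => //; exact: mulr_ge0.
  rewrite -[leRHS]mulr1; apply: ler_wpM2l => //; nra.
have E1 t : E P pi s0 t (fun _ _ => 1) = 1.
  by rewrite /E -(M_E P s0 Hpi t (fun _ => 1)); under eq_bigr do rewrite mulr1; exact: mu_sum.
have cvV : cvgn (fun n => \sum_(0 <= t < n) gamma ^+ t * E P pi s0 t r).
  apply: (@cvg_psum _ gamma _ 1) => // t.
  have hg : 0 <= gamma ^+ t by apply: exprn_ge0; case/andP: Hgamma.
  have h0 : 0 <= E P pi s0 t r.
    rewrite /E; apply: sumr_ge0 => s _; apply: sumr_ge0 => a _.
    apply: mulr_ge0; last by case/andP: (Hr s a).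
    apply: mulr_ge0; [exact: mu_ge0|exact: (Hpi s).1].
  have h1 : E P pi s0 t r <= 1.
    by rewrite -(E1 t); apply: E_le => // s a; case/andP: (Hr s a).
  rewrite mul1r; apply/andP; split; first exact: mulr_ge0.
  rewrite -[leRHS]mulr1; exact: ler_wpM2l.
set K := \sum_s `|U s|.
set Var := fun s a => mdp_variance (P s a) (fun s' => U s' - U' s').
have hL : (fun n => \sum_s \sum_a (\sum_(0 <= t < n) gamma ^+ t * (state_dist P pi s0 t s * pi s a)) * Var s a) @ \oo -->
   \sum_s \sum_a occupancy P pi gamma s0 s a * Var s a.
  apply: cvg_big => // [|s _]; first exact: add_continuous.
  apply: cvg_big => // [|a _]; first exact: add_continuous.
  apply: cvgMr_tmp; exact: cvocc.
have hR : (fun n => theta ^+ 2 + 2 * theta * (U s0 + gamma ^+ n * K - \sum_(0 <= t < n) gamma ^+ t * E P pi s0 t r))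
   @ \oo --> theta ^+ 2 + 2 * theta * (U s0 + 0 * K - Vpi P r gamma pi s0).
  apply: cvgD; first exact: cvg_cst.
  apply: cvgMl_tmp; apply: cvgB; last exact: cvV.
  apply: cvgD; first exact: cvg_cst.
  apply: cvgMr_tmp; apply: cvg_expr.
  by case/andP: Hgamma => g0 g1; rewrite ger0_norm.
have key : \sum_s \sum_a occupancy P pi gamma s0 s a * Var s a <=
    theta ^+ 2 + 2 * theta * (U s0 + 0 * K - Vpi P r gamma pi s0).
  apply: (ler_cvg_to hL hR); apply: filterE => n.
  rewrite swap; exact: (@bound _ _ _ P pi s0 r gamma U U' Vs HP Hpi Hgamma HUU' HU'V HUb HU'b n).
have ht : 0 <= theta := supnorm_ge0 _.
have hU : U s0 - Vs s0 <= theta.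
  exact: le_trans (ler_norm _) (supnorm_le (fun s => U s - Vs s) s0).
rewrite mul0r addr0 in key.
apply: le_trans key _.
nra.
Qed.
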